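(* Let $n\ge2$, let $a_1,\dots,a_n$ be real numbers, $C(t)=\sum_{j=1}^n a_j\cos jt$, $S(t)=\sum_{j=1}^n a_j\sin jt$, and suppose $S(t_1)=0$ with $t_1\in(0,\pi)$. Define $a^{(1)}_1,\dots,a^{(1)}_{n-1}$ by setting $a^{(1)}_n=a^{(1)}_{n+1}=0$ and, for $k=n,n-1,\dots,2$ (in this order), $$a^{(1)}_{k-1}=2a_k+2\cos t_1\, a^{(1)}_k-a^{(1)}_{k+1}.$$ Then $$C(\pi)=-\frac{a^{(1)}_1}{2}-(1+\cos t_1)\sum_{j=1}^{n-1}(-1)^j a^{(1)}_j .$$ *)

(* Defs.v *)
From Stdlib Require Import Reals.
Open Scope R_scope.

Fixpoint sum1 (m : nat) (f : nat -> R) : R :=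
  match m with
  | O => 0
  | S m' => sum1 m' f + f (S m')
  end.

(* Auxiliary: c m = a^{(1)}_{n+1-m}, computed in the order k = n, n-1, ... *)
Fixpoint rec_aux (n : nat) (a : nat -> R) (t1 : R) (m : nat) : R * R :=
  (* returns (c m, c (m+1)) *)
  match m with
  | O => (0, 0)
  | S m' =>
      let (cm', cm) := rec_aux n a t1 m' in
      (* c (m'+2) = a^{(1)}_{n-1-m'} = 2 a_{n-m'} + 2 cos t1 c(m'+1) - c m' *)
      (cm, 2 * a (n - m')%nat + 2 * cos t1 * cm - cm')
  end.

(* a1 n a t1 k = a^{(1)}_k for 1 <= k <= n+1 *)
Definition a1 (n : nat) (a : nat -> R) (t1 : R) (k : nat) : R :=
  fst (rec_aux n a t1 (n + 1 - k)%nat).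

Definition Csum (n : nat) (a : nat -> R) (t : R) : R :=
  sum1 n (fun j => a j * cos (INR j * t)).
Definition Ssum (n : nat) (a : nat -> R) (t : R) : R :=
  sum1 n (fun j => a j * sin (INR j * t)).

(* Main.v *)
Require Import Defs.
From Stdlib Require Import Reals.
From Stdlib Require Import Lra Lia.
Open Scope R_scope.

Lemma sum1_ext m f g : (forall j, (1 <= j <= m)%nat -> f j = g j) -> sum1 m f = sum1 m g.
Proof.
  induction m as [|m IH]; intros H; simpl; auto.
  rewrite IH by (intros; apply H; lia). rewrite (H (S m)) by lia. reflexivity.
Qed.

Lemma sum1_scal m k f : sum1 m (fun j => k * f j) = k * sum1 m f.
Proof. induction m; simpl; [ring|rewrite IHm; ring]. Qed.

Lemma trig_S (N : nat) (t : R) :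
  INR (S (S N)) * t = INR (S N) * t + t /\ INR N * t = INR (S N) * t - t.
Proof. rewrite !S_INR. split; ring. Qed.

Lemma U_sin (b : nat -> R) c t N :
  sum1 N (fun k => (b (pred k) + b (S k) - 2 * c * b k) * sin (INR k * t)) =
  2 * (cos t - c) * sum1 N (fun k => b k * sin (INR k * t)) + b 0%nat * sin t
  + b (S N) * sin (INR N * t) - b N * sin (INR (S N) * t).
Proof.
  induction N as [|N IH].
  - simpl sum1. change (INR 0) with 0. change (INR 1) with 1. rewrite Rmult_0_l, sin_0, Rmult_1_l. ring.
  - cbn [sum1 pred]. rewrite IH.
    destruct (trig_S N t) as [H1 H2]. rewrite H1, H2, sin_plus, sin_minus. ring.
Qed.

Lemma U_cos (b : nat -> R) c t N :
  sum1 N (fun k => (b (pred k) + b (S k) - 2 * c * b k) * cos (INR k * t)) =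
  2 * (cos t - c) * sum1 N (fun k => b k * cos (INR k * t)) + b 0%nat * cos t - b 1%nat
  + b (S N) * cos (INR N * t) - b N * cos (INR (S N) * t).
Proof.
  induction N as [|N IH].
  - simpl sum1. change (INR 0) with 0. change (INR 1) with 1. rewrite Rmult_0_l, cos_0, Rmult_1_l. ring.
  - cbn [sum1 pred]. rewrite IH.
    destruct (trig_S N t) as [H1 H2]. rewrite H1, H2, cos_plus, cos_minus. ring.
Qed.

Lemma cos_kPI k : cos (INR k * PI) = (-1) ^ k.
Proof.
  induction k as [|k IH]; cbn [pow].
  - rewrite Rmult_0_l, cos_0. reflexivity.
  - rewrite S_INR, Rmult_plus_distr_r, Rmult_1_l, cos_plus, cos_PI, sin_PI, IH. ring.
Qed.

Lemma rec_step n a t1 m :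
  fst (rec_aux n a t1 (S (S m))) =
  2 * a (n - m)%nat + 2 * cos t1 * fst (rec_aux n a t1 (S m)) - fst (rec_aux n a t1 m).
Proof.
  simpl. destruct (rec_aux n a t1 m) as [p q]. simpl. reflexivity.
Qed.

Lemma a1_rec n a t1 j : (2 <= j <= n)%nat ->
  a1 n a t1 (pred j) = 2 * a j + 2 * cos t1 * a1 n a t1 j - a1 n a t1 (S j).
Proof.
  intros Hj. unfold a1.
  replace (n + 1 - pred j)%nat with (S (S (n - j))) by lia.
  replace (n + 1 - j)%nat with (S (n - j)) by lia.
  replace (n + 1 - S j)%nat with (n - j)%nat by lia.
  rewrite rec_step. replace (n - (n - j))%nat with j by lia. reflexivity.
Qed.

Lemma a1_n n a t1 : a1 n a t1 n = 0.
Proof. unfold a1. replace (n + 1 - n)%nat with 1%nat by lia. reflexivity. Qed.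

Lemma a1_Sn n a t1 : a1 n a t1 (S n) = 0.
Proof. unfold a1. replace (n + 1 - S n)%nat with 0%nat by lia. reflexivity. Qed.

Theorem corollary2 (n : nat) (a : nat -> R) (t1 : R) :
  (2 <= n)%nat ->
  0 < t1 < PI ->
  Ssum n a t1 = 0 ->
  Csum n a PI =
    - a1 n a t1 1 / 2
    - (1 + cos t1) * sum1 (n - 1) (fun j => (-1) ^ j * a1 n a t1 j).
Proof.
  intros Hn Ht HS.
  set (c := cos t1).
  set (b := fun k => match k with
                     | O => 2 * a 1%nat + 2 * c * a1 n a t1 1 - a1 n a t1 2
                     | _ => a1 n a t1 k end).
  assert (Ha : forall j, (1 <= j <= n)%nat ->
            a j = / 2 * (b (pred j) + b (S j) - 2 * c * b j)).
  { intros j Hj. destruct (Nat.eq_dec j 1) as [->|Hj1].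
    - simpl. field.
    - destruct j as [|j]; [lia|]. destruct j as [|j]; [lia|].
      unfold b. simpl pred.
      pose proof (a1_rec n a t1 (S (S j))) as R. simpl pred in R.
      rewrite R by lia. unfold c. field. }
  assert (Hb0 : b 0%nat = 0).
  { assert (E : 2 * Ssum n a t1 = b 0%nat * sin t1).
    { unfold Ssum.
      rewrite (sum1_ext n _ (fun k => / 2 * ((b (pred k) + b (S k) - 2 * c * b k) * sin (INR k * t1)))).
      2:{ intros j Hj. rewrite (Ha j Hj). ring. }
      rewrite sum1_scal, U_sin.
      assert (b (S n) = 0) by (unfold b; apply a1_Sn).
      assert (b n = 0) by (unfold b; destruct n; [lia|]; apply a1_n).
      rewrite H, H0. unfold c. field. }
    rewrite HS in E. assert (sin t1 > 0) by (apply sin_gt_0; lra). nra. }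
  assert (E : 2 * Csum n a PI =
    2 * (cos PI - c) * sum1 n (fun k => b k * cos (INR k * PI)) - b 1%nat).
  { unfold Csum.
    rewrite (sum1_ext n _ (fun k => / 2 * ((b (pred k) + b (S k) - 2 * c * b k) * cos (INR k * PI)))).
    2:{ intros j Hj. rewrite (Ha j Hj). ring. }
    rewrite sum1_scal, U_cos.
    assert (b (S n) = 0) by (unfold b; apply a1_Sn).
    assert (b n = 0) by (unfold b; destruct n; [lia|]; apply a1_n).
    rewrite H, H0, Hb0. field. }
  destruct n as [|m]; [lia|].
  replace (S m - 1)%nat with m in * by lia.
  cbn [sum1] in E.
  assert (Hbm : b (S m) = 0) by (unfold b; apply a1_n).
  rewrite Hbm in E.
  rewrite (sum1_ext m (fun j => (-1) ^ j * a1 (S m) a t1 j) (fun k => b k * cos (INR k * PI))).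
  2:{ intros j Hj. rewrite cos_kPI. destruct j; [lia|]. unfold b. ring. }
  rewrite cos_PI in E. fold c. change (b 1%nat) with (a1 (S m) a t1 1) in E.
  lra.
Qed.
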